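(* For $\mu\in V$ and $x\in\mathcal W^J$ set $c(\mu)^J_x=\sum_{u\in\mathcal W_J}xu(\mu)$. Then for every $s\in\mathcal S$, $c(\mu)^J:=(c(\mu)^J_x)_{x\in\mathcal W^J}$ lies in ${}^s\mathcal Z^J$.
   Context: Let $(\mathcal W,\mathcal S)$ be a Coxeter system with $\mathcal W$ a Weyl group, length $\ell$, reflections $\mathcal T$. $V$ is the geometric representation (real, basis $\{\alpha_s\}$, $s(v)=v-2\langle v,\alpha_s\rangle\alpha_s$ for the form $\langle\alpha_s,\alpha_t\rangle=-\cos(\pi/m_{st})$); for $t=wsw^{-1}$, $\alpha_t=w(\alpha_s)$ up to scalar; $V\subset S=\mathrm{Sym}(V)$. Fix $J\subseteq\mathcal S$ with $\mathcal W_J=\langle J\rangle$ finite; $\mathcal W^J$ minimal coset representatives, $x^J$ the representative of $x\mathcal W_J$. Graph $\mathcal G^J$: vertices $\mathcal W^J$, edge $x\to y$ iff $\ell(x)<\ell(y)$, $y\notin x\mathcal W_J$, $y=txw$ ($t\in\mathcal T$, $w\in\mathcal W_J$), labelled $\mathbb R\alpha_t$. $\mathcal Z^J=\{(z_x)\in\prod_{x\in\mathcal W^J}S: z_x-z_y\in\alpha_tS$ for each edge labelled $\mathbb R\alpha_t\}$. ${}_s\sigma((z_x))=(\tau_s(z_{(sx)^J}))_x$ with $\tau_s$ the automorphism of $S$ induced by $s$; ${}^s\mathcal Z^J$ is the subalgebra of ${}_s\sigma$-invariants. *)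

(* Defs.v *)
From Stdlib Require Import Reals.
From mathcomp Require Import all_boot all_algebra.
From mathcomp Require Import mpoly.
From mathcomp Require Import Rstruct.

Set Implicit Arguments.
Unset Strict Implicit.
Unset Printing Implicit Defensive.
Import GRing.Theory.
Local Open Scope ring_scope.

Section Coxeter.

(* A Coxeter system of rank n given by its Coxeter matrix m;
   the value 0 encodes m_st = infinity. *)
Variables (n : nat) (m : 'I_n -> 'I_n -> nat).

Definition coxeter_matrix : Prop :=
  forall i j : 'I_n, m i j = m j i /\ (m i j == 1%N) = (i == j).

Definition crystallographic : Prop :=
  forall i j : 'I_n, i != j -> (m i j \in [:: 2; 3; 4; 6; 0])%N.

Definition gram : 'M[R]_n :=
  \matrix_(i, j) (if m i j == 0%N then -1
                  else - cos (PI / INR (m i j))%R).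

Definition alpha (i : 'I_n) : 'cV[R]_n := delta_mx i 0.

(* s_i(v) = v - 2 <v, alpha_i> alpha_i, as a matrix acting on columns *)
Definition refl (i : 'I_n) : 'M[R]_n :=
  1%:M - 2%:R *: (alpha i *m ((alpha i)^T *m gram)).

Definition word (s : seq 'I_n) : 'M[R]_n := foldr (fun i w => refl i *m w) 1%:M s.

(* W (as the image of the faithful geometric representation) *)
Definition inW (w : 'M[R]_n) : Prop := exists s, word s = w.

Definition inWJ (J : {set 'I_n}) (w : 'M[R]_n) : Prop :=
  exists s, all (fun i => i \in J) s /\ word s = w.

Definition is_length (w : 'M[R]_n) (l : nat) : Prop :=
  (exists s, size s = l /\ word s = w) /\
  (forall s, word s = w -> (l <= size s)%N).

Definition len_lt (x y : 'M[R]_n) : Prop :=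
  exists lx ly, is_length x lx /\ is_length y ly /\ (lx < ly)%N.

Definition len_le (x y : 'M[R]_n) : Prop :=
  exists lx ly, is_length x lx /\ is_length y ly /\ (lx <= ly)%N.

Definition minrep (J : {set 'I_n}) (x : 'M[R]_n) : Prop :=
  inW x /\ forall w, inWJ J w -> len_le x (x *m w).

Definition is_rep (J : {set 'I_n}) (x y : 'M[R]_n) : Prop :=
  minrep J y /\ exists w, inWJ J w /\ y = x *m w.

(* edge x -> y of G^J labelled R alpha_t, where t = v s_i v^{-1} and
   alpha_t = v(alpha_i) (up to a scalar) *)
Definition edge (J : {set 'I_n}) (x y : 'M[R]_n) (a : 'cV[R]_n) : Prop :=
  minrep J x /\ minrep J y /\ len_lt x y /\
  ~ (exists u, inWJ J u /\ y = x *m u) /\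
  exists (v : 'M[R]_n) (i : 'I_n) (w : 'M[R]_n),
    inW v /\ inWJ J w /\ y = v *m refl i *m invmx v *m x *m w /\
    a = v *m alpha i.

(* V inside S = Sym(V) = R[alpha_1, ..., alpha_n] *)
Definition linS (v : 'cV[R]_n) : {mpoly R[n]} := \sum_(i < n) v i 0 *: 'X_i.

(* tau_i : the R-algebra automorphism of S induced by s_i *)
Definition tau (i : 'I_n) (p : {mpoly R[n]}) : {mpoly R[n]} :=
  p \mPo [tuple linS (refl i *m alpha j) | j < n].

Definition inZ (J : {set 'I_n}) (z : 'M[R]_n -> {mpoly R[n]}) : Prop :=
  forall x y a, edge J x y a -> exists q, z x - z y = linS a * q.

Definition inZs (J : {set 'I_n}) (i : 'I_n) (z : 'M[R]_n -> {mpoly R[n]}) : Prop :=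
  inZ J z /\
  forall x y, minrep J x -> is_rep J (refl i *m x) y -> tau i (z y) = z x.

(* c(mu)^J_x = sum_{u in W_J} x u (mu), given an enumeration l of W_J *)
Definition cJ (l : seq 'M[R]_n) (mu : 'cV[R]_n) (x : 'M[R]_n) : {mpoly R[n]} :=
  linS (\sum_(u <- l) (x *m u *m mu)).

End Coxeter.

(* Main.v *)
Require Import Defs.
From Stdlib Require Import Reals.
From mathcomp Require Import all_boot all_algebra.
From mathcomp Require Import mpoly.
From mathcomp Require Import Rstruct.
From mathcomp Require Import ring.
Import GRing.Theory.
Local Open Scope ring_scope.

Lemma gram_ii n (m : 'I_n -> 'I_n -> nat) (Hm : coxeter_matrix m) i :
  gram m i i = 1.
Proof.
rewrite /gram mxE.
have -> : m i i = 1%N by have [_ /eqP] := Hm i i; rewrite eqxx.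
replace (PI / INR 1)%R with PI; last by rewrite (_ : INR 1 = 1) ?divr1.
by rewrite cos_PI opprK.
Qed.

Lemma aGa n (m : 'I_n -> 'I_n -> nat) (Hm : coxeter_matrix m) i :
  (alpha i)^T *m gram m *m alpha i = 1%:M.
Proof.
apply/matrixP => a b; rewrite !ord1 !mxE.
rewrite (bigD1 i) //= big1 ?addr0; last first.
  by move=> j /negbTE ji; rewrite !mxE ji /= mulr0.
rewrite !mxE !eqxx /= mulr1 (bigD1 i) //= big1 ?addr0; last first.
  by move=> j /negbTE ji; rewrite !mxE ji /= mul0r.
rewrite !mxE !eqxx /= mul1r; have := @gram_ii _ _ Hm i; rewrite mxE; exact.
Qed.

Lemma refl_invol n (m : 'I_n -> 'I_n -> nat) (Hm : coxeter_matrix m) i :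
  refl m i *m refl m i = 1%:M.
Proof.
set P := alpha i *m ((alpha i)^T *m gram m).
have PP : P *m P = P.
  by rewrite /P -mulmxA (mulmxA ((alpha i)^T *m gram m) (alpha i)) (@aGa _ _ Hm i) mul1mx.
rewrite /refl -/P mulmxBl mul1mx mulmxBr mulmx1 -!scalemxAl -!scalemxAr PP.
rewrite scalerA.
by apply/matrixP => a b; rewrite !mxE; ring.
Qed.

Lemma word_cat n (m : 'I_n -> 'I_n -> nat) s t :
  word m (s ++ t) = word m s *m word m t.
Proof. elim: s => [|j s IH] /=; first by rewrite mul1mx. by rewrite IH mulmxA. Qed.

Lemma refl_unit n (m : 'I_n -> 'I_n -> nat) (Hm : coxeter_matrix m) j :
  refl m j \in unitmx.
Proof. exact: (mulmx1_unit (@refl_invol _ _ Hm j)).1. Qed.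

Lemma word_unit n (m : 'I_n -> 'I_n -> nat) (Hm : coxeter_matrix m) s :
  word m s \in unitmx.
Proof.
elim: s => [|j s IH] /=; first exact: unitmx1.
by rewrite unitmx_mul IH andbT (@refl_unit _ _ Hm).
Qed.

Lemma inWJ_mul n (m : 'I_n -> 'I_n -> nat) J w u :
  inWJ m J w -> inWJ m J u -> inWJ m J (w *m u).
Proof.
move=> [s [Hs <-]] [t [Ht <-]]; exists (s ++ t).
by rewrite all_cat Hs Ht word_cat.
Qed.

Lemma reindex n (m : 'I_n -> 'I_n -> nat) (Hm : coxeter_matrix m)
    (J : {set 'I_n}) (l : seq 'M[R]_n)
    (Hl_uniq : uniq l) (Hl : forall w, inWJ m J w <-> w \in l)
    (F : 'M[R]_n -> 'cV[R]_n) w :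
  inWJ m J w -> \sum_(u <- l) F (w *m u) = \sum_(u <- l) F u.
Proof.
move=> Hw.
have wU : w \in unitmx by case: Hw => s [_ <-]; exact: (@word_unit _ _ Hm).
rewrite -(big_map (mulmx w) xpredT F); apply: perm_big.
have inj : injective (@mulmx _ n n n w) := can_inj (mulKmx wU).
have U : uniq (map (mulmx w) l) by rewrite (map_inj_uniq inj).
apply: uniq_perm => //.
apply: (uniq_min_size U _ _).2; last by rewrite size_map.
move=> v /mapP [u ul ->]; apply/Hl; apply: inWJ_mul => //; exact/Hl.
Qed.

Lemma linSD n (u v : 'cV[R]_n) : linS (u + v) = linS u + linS v.
Proof. by rewrite /linS -big_split; apply: eq_bigr => j _; rewrite mxE scalerDl. Qed.

Lemma linS0 n : linS (0 : 'cV[R]_n) = 0.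
Proof. by rewrite /linS big1 // => j _; rewrite mxE scale0r. Qed.

Lemma linSZ n k (u : 'cV[R]_n) : linS (k *: u) = k *: linS u.
Proof. by rewrite /linS scaler_sumr; apply: eq_bigr => j _; rewrite mxE scalerA. Qed.

Lemma linSB n (u v : 'cV[R]_n) : linS (u - v) = linS u - linS v.
Proof.
by rewrite -scaleN1r linSD linSZ scaleN1r.
Qed.

Lemma linS_sum n (I : Type) (r : seq I) (F : I -> 'cV[R]_n) :
  linS (\sum_(x <- r) F x) = \sum_(x <- r) linS (F x).
Proof. by apply: (big_morph (@linS n)); [exact: linSD | exact: linS0]. Qed.

Lemma col_decomp n (z : 'cV[R]_n) : z = \sum_(j < n) z j 0 *: alpha j.
Proof.
apply/matrixP => a b; rewrite !ord1 summxE (bigD1 a) //= big1 ?addr0.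
  by rewrite !mxE !eqxx mulr1.
by move=> j /negbTE ja; rewrite !mxE eq_sym ja mulr0.
Qed.

Lemma tau_linS n (m : 'I_n -> 'I_n -> nat) i (z : 'cV[R]_n) :
  tau m i (linS z) = linS (refl m i *m z).
Proof.
rewrite /tau [linS z]/linS raddf_sum /=.
rewrite {2}(@col_decomp n z) mulmx_sumr.
rewrite (eq_bigr (fun j => z j 0 *: linS (refl m i *m alpha j))); last first.
  by move=> j _; rewrite comp_mpolyZ comp_mpolyXU -tnth_nth tnth_mktuple.
rewrite linS_sum; apply: eq_bigr => j _.
by rewrite -scalemxAr linSZ.
Qed.

Lemma refl_apply n (m : 'I_n -> 'I_n -> nat) j (z : 'cV[R]_n) :
  refl m j *m z = z - (2 * ((alpha j)^T *m gram m *m z) 0 0) *: alpha j.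
Proof.
rewrite /refl mulmxBl mul1mx -scalemxAl -(mulmxA (alpha j)).
have -> : alpha j *m ((alpha j)^T *m gram m *m z) =
          ((alpha j)^T *m gram m *m z) 0 0 *: alpha j.
  by rewrite {1}(mx11_scalar ((alpha j)^T *m gram m *m z)) mul_mx_scalar.
by rewrite scalerA.
Qed.

Theorem lemma4p2 (n : nat) (m : 'I_n -> 'I_n -> nat)
    (Hm : coxeter_matrix m) (Hcr : crystallographic m)
    (J : {set 'I_n}) (l : seq 'M[R]_n)
    (Hl_uniq : uniq l) (Hl : forall w, inWJ m J w <-> w \in l)
    (mu : 'cV[R]_n) (i : 'I_n) :
  inZs m J i (cJ l mu).
Proof.
set Z := fun x : 'M[R]_n => \sum_(u <- l) (x *m u *m mu).
have key : forall (t x w : 'M[R]_n), inWJ m J w ->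
    \sum_(u <- l) (t *m x *m w *m u *m mu) = t *m Z x.
  move=> t x w Hw; rewrite /Z mulmx_sumr.
  rewrite -(@reindex _ _ Hm J l Hl_uniq Hl (fun u => t *m (x *m u *m mu)) w Hw).
  by apply: eq_bigr => u _; rewrite !mulmxA.
split.
  move=> x y a [_ [_ [_ [_ [v [j [w [[s Hv] [Hw [Hy Ha]]]]]]]]]].
  have vU : v \in unitmx by rewrite -Hv (@word_unit _ _ Hm).
  rewrite /cJ Hy key // -/(Z x) -mulmxA -mulmxA refl_apply mulmxBr.
  rewrite mulKVmx // -scalemxAr -Ha linSB opprB addrC subrK linSZ.
  exists ((2 * ((alpha j)^T *m gram m *m (invmx v *m Z x)) 0 0)%:MP).
  by rewrite (mulrC (linS a)) mul_mpolyC.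
move=> x y Hx [_ [w [Hw Hy]]].
rewrite /cJ Hy key // tau_linS mulmxA.
by rewrite (@refl_invol _ _ Hm i) mul1mx.
Qed.
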